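(* Let $p>11$ be prime, $q=p^h$, and let $\mathcal{F}: aX^n+bY^n=Z^n$ with $a,b\in\mathbb{F}_q$, $ab\neq0$, $n>3$, be an irreducible Fermat curve over $\mathbb{F}_q$. Suppose $n=\frac{3(p^h-1)}{p^r-1}$ for a positive integer $r$ and $a,b\in\mathbb{F}_{p^r}$. Let $\mathcal{C}$ be the curve $aX^3+bY^3=Z^3$ over $\mathbb{F}_{p^r}$ and $k:=\#\{(x_0:x_1:x_2)\in\mathcal{C}(\mathbb{F}_{p^r}) : x_0x_1x_2=0\}$. (1) If $p^r\equiv1\pmod 3$, then $N_q(\mathcal{F})=\frac{n^2}{9}\big(N_{p^r}(\mathcal{C})-k\big)+\frac{nk}{3}$. (2) If $p^r\not\equiv1\pmod3$, then $N_q(\mathcal{F})=\frac{n^2}{9}(p^r-2)+n$.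
   Context: $N_{Q}(\mathcal{X})$ denotes the number of $\mathbb{F}_{Q}$-rational points of a projective curve $\mathcal{X}$, and $\mathcal{X}(\mathbb{F}_Q)$ the set of such points. *)

(* Defs.v *)
From mathcomp Require Import all_boot all_order all_algebra all_field.
Set Implicit Arguments. Unset Strict Implicit. Unset Printing Implicit Defensive.
Import GRing.Theory.
Local Open Scope ring_scope.

(* A triple (x,y,z) is the normalized representative of a point of P^2:
   its first nonzero coordinate equals 1 (so (0,0,0) is excluded). *)
Definition normalized (F : fieldType) (t : F * F * F) : bool :=
  let: (x, y, z) := t in
  if x != 0 then x == 1 else if y != 0 then y == 1 else z == 1.

Definition fermat_eq (F : fieldType) (n : nat) (a b : F) (t : F * F * F) : bool :=
  let: (x, y, z) := t in a * x ^+ n + b * y ^+ n == z ^+ n.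

Definition Npts (F : finFieldType) (n : nat) (a b : F) : nat :=
  #|[set t : F * F * F | normalized t && fermat_eq n a b t]|.

Definition Npts_axes (F : finFieldType) (n : nat) (a b : F) : nat :=
  #|[set t : F * F * F | [&& normalized t, fermat_eq n a b t &
                            t.1.1 * t.1.2 * t.2 == 0]]|.

(* Main.v *)
Require Import Defs.
From mathcomp Require Import all_boot all_order all_algebra all_field.
From mathcomp Require Import zify ring.
Import GRing.Theory.
Local Open Scope ring_scope.

Lemma powm1 (F : finFieldType) (x : F) : x != 0 -> x ^+ (#|F|.-1) = 1.
Proof.
move=> nz; have := expf_card x.
rewrite -(prednK (ltnW (card_finNzRing_gt1 F))) exprS => H.
by apply: (mulfI nz); rewrite H mulr1.
Qed.

Lemma fermat_image (F K : finFieldType) (f : {rmorphism K -> F}) (e : nat) :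
  (#|F|.-1 = e * #|K|.-1)%N -> forall z : F, exists c : K, f c = z ^+ e.
Proof.
move=> He z; case: (eqVneq z 0) => [->|nz].
  by exists (0 ^+ e); rewrite rmorphXn rmorph0.
set y := z ^+ e.
have y1 : y ^+ (#|K|.-1) = 1 by rewrite /y -exprM -He powm1.
case: (pickP (fun c => f c == y)) => [c /eqP Hc|H]; first by exists c.
exfalso.
have K1 := card_finNzRing_gt1 K.
pose pol : {poly F} := 'X^(#|K|.-1) - 1%:P.
have K0 : (0 < #|K|.-1)%N by rewrite -ltnS prednK // ltnW.
have spol : size pol = #|K| by rewrite size_XnsubC // prednK // ltnW.
have pn0 : pol != 0 by rewrite -size_poly_gt0 spol (ltnW K1).
have := @max_poly_roots _ pol (y :: map f (enum (predC1 0))) pn0.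
rewrite /= size_map -cardE cardC1 spol prednK ?(ltnW K1) // ltnn.
move=> /(_ _ _)/negP; apply.
  rewrite /root !hornerE y1 subrr eqxx /=; apply/allP => w /mapP[c].
  rewrite mem_enum /= => cn0 ->; rewrite /root !hornerE -rmorphXn powm1 //.
  by rewrite rmorph1 subrr.
rewrite map_inj_uniq ?enum_uniq ?andbT; last exact: fmorph_inj.
apply/mapP => -[c _ yc]; have := H c; by rewrite yc eqxx.
by [].
Qed.

Lemma sum_le_eq (I : finType) (P : pred I) (x : I -> nat) (e : nat) :
  (forall i, P i -> (x i <= e)%N) ->
  (\sum_(i | P i) x i = \sum_(i | P i) e)%N -> forall i, P i -> x i = e.
Proof.
move=> le Hs i Pi; apply/eqP; rewrite eqn_leq le //= leqNgt; apply/negP => lt.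
have : (\sum_(i | P i) x i < \sum_(i | P i) e)%N.
  rewrite (bigD1 i) //= [X in (_ < X)%N](bigD1 i) //= -addSn leq_add //.
  by apply: leq_sum => j /andP[Pj _]; exact: le.
by rewrite Hs ltnn.
Qed.

Lemma card_sum (T : finType) (P : pred T) : #|[set z | P z]| = (\sum_z (P z : nat))%N.
Proof. by rewrite -sum1_card big_mkcond; apply: eq_bigr => z _; rewrite inE; case: (P z). Qed.

Lemma fiber_le (F : finFieldType) (e : nat) (y : F) : (0 < e)%N ->
  (#|[set z : F | z ^+ e == y]| <= e)%N.
Proof.
move=> e0; rewrite cardE -ltnS -(size_XnsubC y e0).
apply: max_poly_roots; first by rewrite -size_poly_gt0 size_XnsubC.
  apply/allP => z; rewrite mem_enum inE => /eqP ze.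
  by rewrite /root !hornerE ze subrr.
exact: enum_uniq.
Qed.

Lemma fermat_fiber (F K : finFieldType) (f : {rmorphism K -> F}) (e : nat) :
  (0 < e)%N -> (#|F|.-1 = e * #|K|.-1)%N ->
  forall c : K, c != 0 -> #|[set z : F | z ^+ e == f c]| = e.
Proof.
move=> e0 He.
have tot : (\sum_(c : K) #|[set z : F | z ^+ e == f c]| = #|F|)%N.
  under eq_bigr do rewrite card_sum.
  rewrite exchange_big /= -sum1_card; apply: eq_bigr => z _.
  have [c0 fc0] := @fermat_image _ _ f e He z.
  rewrite (bigD1 c0) //= -fc0 eqxx big1 // => c ne.
  by rewrite (inj_eq (fmorph_inj f)) eq_sym (negbTE ne).
rewrite (bigD1 0) //= in tot.
have S0 : #|[set z : F | z ^+ e == f 0]| = 1%N.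
  rewrite -(cards1 (0 : F)); apply: eq_card => z; rewrite !inE rmorph0 expf_eq0 e0.
  by [].
rewrite S0 add1n in tot.
apply: (@sum_le_eq _ (fun c => c != 0) (fun c => #|[set z : F | z ^+ e == f c]|)).
  by move=> c _; apply: fiber_le.
have -> : (\sum_(i : K | i != 0%R) e = e * #|K|.-1)%N.
  by rewrite sum_nat_const cardC1 mulnC.
by rewrite -He -tot.
Qed.

Lemma sum_pick1 (T : finType) (x : T) (Q : T -> bool) :
  (\sum_(v : T) ((v == x) && Q v : nat) = Q x)%N.
Proof.
rewrite (bigD1 x) //= eqxx big1 ?addn0 // => v nv; by rewrite (negbTE nv).
Qed.

Lemma sum_two (T : finType) (a b : T) (G : T -> nat) : a != b ->
  (forall x, x != a -> x != b -> G x = 0%N) -> (\sum_x G x = G a + G b)%N.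
Proof.
move=> ab H; rewrite (bigD1 a) //= (bigD1 b) /=; last by rewrite eq_sym.
rewrite big1 ?addn0 // => x /andP[xa xb]; exact: H.
Qed.

Lemma norm_split (F : finFieldType) (Q : F * F * F -> bool) :
  #|[set t : F * F * F | normalized t && Q t]| =
  (#|[set u : F * F | Q (1%R : F, u.1, u.2)]| + #|[set z : F | Q (0%R : F, 1%R : F, z)]| + Q (0%R : F, 0%R : F, 1%R : F))%N.
Proof.
rewrite !card_sum.
transitivity (\sum_(x : F) \sum_(y : F) \sum_(z : F) (normalized (x, y, z) && Q (x, y, z) : nat))%N.
  rewrite pair_bigA pair_bigA /=.
  by apply: eq_bigr => [[[x y] z]] _.
have -> : (\sum_(u : F * F) Q (1%R : F, u.1, u.2) = \sum_(y : F) \sum_(z : F) Q (1%R : F, y, z))%N.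
  by rewrite pair_bigA /=; apply: eq_bigr => [[y z]] _.
rewrite [in LHS](@sum_two _ (1%R : F) (0%R : F)) ?oner_neq0 //; last first.
  move=> x x1 x0; apply: big1 => y _; apply: big1 => z _.
  by rewrite /normalized x0 (negbTE x1).
rewrite -addnA; congr (_ + _)%N.
  by apply: eq_bigr => y _; apply: eq_bigr => z _; rewrite /normalized oner_neq0 eqxx.
rewrite [in LHS](@sum_two _ (1%R : F) (0%R : F)) ?oner_neq0 //; last first.
  move=> y y1 y0; apply: big1 => z _.
  by rewrite /normalized eqxx /= y0 (negbTE y1).
congr (_ + _)%N.
  by apply: eq_bigr => z _; rewrite /normalized eqxx /= oner_neq0 eqxx.
rewrite -(@sum_pick1 _ (1%R : F) (fun z => Q (0%R : F, 0%R : F, z))).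
by apply: eq_bigr => z _; rewrite /normalized !eqxx.
Qed.

Section Helpers.
Set Implicit Arguments. Unset Strict Implicit.

Definition gmap (F K : finFieldType) (f : {rmorphism K -> F}) (e : nat) (y : F) : K :=
  odflt 0 [pick c | f c == y ^+ e].

Lemma gmapP (F K : finFieldType) (f : {rmorphism K -> F}) (e : nat) :
  (#|F|.-1 = e * #|K|.-1)%N -> forall y, f (gmap f e y) = y ^+ e.
Proof.
move=> He y; rewrite /gmap; case: pickP => [c /eqP //|H].
have [c fc] := @fermat_image _ _ f e He y.
by have := H c; rewrite fc eqxx.
Qed.

Lemma fiber_sum (F K : finFieldType) (f : {rmorphism K -> F}) (e : nat) (G : K -> nat) :
  (0 < e)%N -> (#|F|.-1 = e * #|K|.-1)%N ->
  (\sum_(y : F) G (gmap f e y) =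
   \sum_(c : K) (if c == 0%R then 1 else e) * G c)%N.
Proof.
move=> e0 He; rewrite (partition_big (gmap f e) xpredT) //=.
apply: eq_bigr => c _.
rewrite (eq_bigr (fun _ => G c)); last by move=> y /eqP ->.
rewrite sum_nat_const; congr (_ * _)%N.
have -> : #|[pred i | gmap f e i == c]| = #|[set y : F | y ^+ e == f c]|.
  apply: eq_card => y; rewrite !inE -(inj_eq (fmorph_inj f)) gmapP //.
case: eqP => [->|/eqP cn0]; last by rewrite fermat_fiber.
rewrite -(cards1 (0 : F)); apply: eq_card => z; rewrite !inE rmorph0 expf_eq0 e0.
by [].
Qed.

Definition EK (K : fieldType) (a b c d : K) : bool := a + b * c ^+ 3 == d ^+ 3.
Definition Ysum (K : finFieldType) (a b : K) : nat :=
  \sum_(c : K) \sum_(d : K) (EK a b c d && (c * d != 0)%R : nat).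
Definition Xsum (K : finFieldType) (a b : K) : nat :=
  \sum_(c : K) \sum_(d : K) (EK a b c d && (c * d == 0)%R : nat).
Definition Bsum (K : finFieldType) (b : K) : nat :=
  \sum_(d : K) ((b == d ^+ 3)%R : nat).

Lemma split_E (K : finFieldType) (a b : K) :
  (Ysum a b + Xsum a b = \sum_(u : K * K) (EK a b u.1 u.2 : nat))%N.
Proof.
have -> : (\sum_(u : K * K) (EK a b u.1 u.2 : nat) = \sum_(c : K) \sum_(d : K) (EK a b c d : nat))%N.
  by rewrite pair_bigA.
rewrite /Ysum /Xsum -big_split /=; apply: eq_bigr => c _.
rewrite -big_split /=; apply: eq_bigr => d _.
by case: (EK a b c d); case: (c * d == 0)%R.
Qed.

Lemma NK (K : finFieldType) (a b : K) :
  Npts 3 a b = (Ysum a b + Xsum a b + Bsum b)%N.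
Proof.
rewrite /Npts norm_split split_E !card_sum /= /fermat_eq.
have -> : ((a * 0 ^+ 3 + b * 0 ^+ 3) == 1 ^+ 3) = false.
  by rewrite expr1n !exprS !mul0r !mulr0 addr0 eq_sym oner_eq0.
rewrite addn0; congr (_ + _)%N.
  by apply: eq_bigr => u _; rewrite expr1n mulr1.
by apply: eq_bigr => z _; rewrite expr1n !exprS !mul0r !mulr0 add0r mulr1.
Qed.

Lemma NKaxes (K : finFieldType) (a b : K) :
  Npts_axes 3 a b = (Xsum a b + Bsum b)%N.
Proof.
rewrite /Npts_axes (@norm_split _ (fun t : K * K * K => fermat_eq 3 a b t && (t.1.1 * t.1.2 * t.2 == 0))).
rewrite !card_sum /= /fermat_eq.
have -> : ((a * 0 ^+ 3 + b * 0 ^+ 3) == 1 ^+ 3) && (0 * 0 * 1 == 0) = false.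
  by rewrite expr1n !exprS !mul0r !mulr0 addr0 eq_sym oner_eq0.
rewrite addn0 /Xsum /Bsum; congr (_ + _)%N.
  rewrite pair_bigA; apply: eq_bigr => u _; by rewrite expr1n mulr1 mul1r.
by apply: eq_bigr => z _; rewrite expr1n !exprS !mul0r !mulr0 add0r mulr1 eqxx andbT.
Qed.

Lemma NF (F K : finFieldType) (f : {rmorphism K -> F}) (e : nat) (a b : K) :
  (0 < e)%N -> (#|F|.-1 = e * #|K|.-1)%N -> a != 0 -> b != 0 ->
  Npts (e * 3) (f a) (f b) = (e * e * Ysum a b + e * Xsum a b + e * Bsum b)%N.
Proof.
move=> e0 He an0 bn0.
have n0 : (e * 3 == 0)%N = false by rewrite muln_eq0 orbF eqn0Ngt e0.
have z0 : (0 : F) ^+ (e * 3) = 0 by rewrite expr0n n0.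
have pw y : y ^+ (e * 3) = f (gmap f e y ^+ 3) by rewrite rmorphXn gmapP // exprM.
pose w (c : K) := if c == 0 then 1%N else e.
rewrite /Npts norm_split !card_sum /= /fermat_eq z0 !mulr0 addr0 expr1n eq_sym oner_eq0 addn0.
congr (_ + _)%N.
  transitivity (\sum_(y : F) \sum_(z : F) (EK a b (gmap f e y) (gmap f e z) : nat))%N.
    rewrite pair_bigA; apply: eq_bigr => u _; congr nat_of_bool.
    by rewrite /EK !pw mulr1 -rmorphM -rmorphD (inj_eq (fmorph_inj f)).
  transitivity (\sum_(y : F) \sum_(d : K) w d * (EK a b (gmap f e y) d : nat))%N.
    apply: eq_bigr => y _; exact: (fiber_sum f (fun d => (EK a b (gmap f e y) d : nat)) e0 He).
  transitivity (\sum_(c : K) w c * \sum_(d : K) w d * (EK a b c d : nat))%N.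
    exact: (fiber_sum f (fun c => \sum_(d : K) w d * (EK a b c d : nat))%N e0 He).
  have E00 : EK a b 0 0 = false.
    by rewrite /EK !exprS !mul0r mulr0 addr0 (negbTE an0).
  rewrite /Ysum /Xsum !big_distrr -big_split /=; apply: eq_bigr => c _.
  rewrite !big_distrr -big_split /=; apply: eq_bigr => d _.
  rewrite /w; case: (eqVneq c 0) => [->|cn0]; case: (eqVneq d 0) => [->|dn0].
  - by rewrite E00 /= !muln0.
  - by rewrite mul0r eqxx /=; case: (EK a b 0 d); rewrite /= ?muln0 ?muln1 ?mul1n.
  - by rewrite mulr0 eqxx /=; case: (EK a b c 0); rewrite /= ?muln0 ?muln1 ?mul1n.
  - rewrite mulf_eq0 (negbTE cn0) (negbTE dn0) /=.
    by case: (EK a b c d); rewrite /= ?muln0 ?muln1 ?addn0.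
transitivity (\sum_(z : F) ((b == gmap f e z ^+ 3) : nat))%N.
  apply: eq_bigr => z _; congr nat_of_bool.
  by rewrite mulr1 add0r pw (inj_eq (fmorph_inj f)).
transitivity (\sum_(d : K) w d * ((b == d ^+ 3) : nat))%N.
  by have := (fiber_sum f (fun d => ((b == d ^+ 3) : nat)) e0 He).
rewrite /Bsum big_distrr /=.
apply: eq_bigr => d _; case: (eqVneq d 0) => [->|dn0].
  by rewrite exprS mul0r (negbTE bn0) !muln0.
by rewrite /w (negbTE dn0).
Qed.

Lemma cube_inv (K : finFieldType) : (#|K| %% 3 = 2)%N ->
  exists m, forall x : K, (x ^+ 3) ^+ m = x.
Proof.
move=> H3; exists (2 * (#|K| %/ 3) + 1)%N => x.
have em : (3 * (2 * (#|K| %/ 3) + 1) + 1 = 2 * #|K|)%N.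
  have := divn_eq #|K| 3; rewrite H3; move: (#|K| %/ 3)%N => q; lia.
rewrite -exprM; case: (eqVneq x 0) => [->|nx]; first by rewrite expr0n muln_eq0 addn1.
apply: (mulIf nx); rewrite -exprSr -addn1 em mulnC exprM expf_card.
by rewrite expr2.
Qed.

Lemma sum_cube (K : finFieldType) (G : K -> nat) : (#|K| %% 3 = 2)%N ->
  (\sum_(c : K) G (c ^+ 3) = \sum_(u : K) G u)%N.
Proof.
move=> H3; have [m Hm] := cube_inv H3.
symmetry; rewrite (reindex (fun c : K => c ^+ 3)) //=.
apply: onW_bij; exists (fun x : K => x ^+ m) => x; first exact: Hm.
by rewrite -exprM mulnC exprM.
Qed.

Lemma Bsum1 (K : finFieldType) (b : K) : (#|K| %% 3 = 2)%N -> Bsum b = 1%N.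
Proof.
move=> H3; rewrite /Bsum (sum_cube (fun v => (b == v : nat)) H3).
transitivity (\sum_(v : K) ((v == b) && true : nat))%N.
  by apply: eq_bigr => v _; rewrite eq_sym andbT.
exact: (@sum_pick1 _ b xpredT).
Qed.

Lemma sum_eq1 (T : finType) (x : T) : (\sum_(v : T) (x == v : nat) = 1)%N.
Proof.
transitivity (\sum_(v : T) ((v == x) && true : nat))%N.
  by apply: eq_bigr => v _; rewrite eq_sym andbT.
exact: (@sum_pick1 _ x xpredT).
Qed.

Lemma YXsum (K : finFieldType) (a b : K) : (#|K| %% 3 = 2)%N ->
  (Ysum a b + Xsum a b = #|K|)%N.
Proof.
move=> H3; rewrite /Ysum /Xsum -big_split /= -sum1_card; apply: eq_bigr => c _.
rewrite -big_split /=.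
transitivity (\sum_(d : K) ((a + b * c ^+ 3 == d ^+ 3)%R : nat))%N.
  by apply: eq_bigr => d _; rewrite /EK; case: (_ == _); case: (_ == 0).
by rewrite (sum_cube (fun v => ((a + b * c ^+ 3 == v)%R : nat)) H3) sum_eq1.
Qed.

Lemma Xsum2 (K : finFieldType) (a b : K) : (#|K| %% 3 = 2)%N -> a != 0 -> b != 0 ->
  Xsum a b = 2%N.
Proof.
move=> H3 an0 bn0; rewrite /Xsum.
transitivity (\sum_(u : K) \sum_(v : K) (((a + b * u == v) && (u * v == 0))%R : nat))%N.
  rewrite -(sum_cube (fun u => \sum_(v : K) (((a + b * u == v) && (u * v == 0))%R : nat))%N H3).
  apply: eq_bigr => c _.
  rewrite -(sum_cube (fun v => (((a + b * c ^+ 3 == v) && (c ^+ 3 * v == 0))%R : nat)) H3).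
  by apply: eq_bigr => d _; rewrite /EK -exprMn expf_eq0.
transitivity (\sum_(u : K) (((u == 0) || (u == - (a / b)))%R : nat))%N.
  apply: eq_bigr => u _.
  transitivity (\sum_(v : K) (((v == a + b * u) && (u * v == 0))%R : nat))%N.
    by apply: eq_bigr => v _; rewrite eq_sym.
  rewrite sum_pick1 mulf_eq0; congr (nat_of_bool (_ || _)).
  apply/eqP/eqP => [H|->]; last by rewrite mulrN mulrCA divff // mulr1 subrr.
  by apply: (mulfI bn0); rewrite mulrN mulrCA divff // mulr1; apply/eqP; rewrite -addr_eq0 addrC H.
rewrite (@sum_two _ 0 (- (a / b))).
- by rewrite !eqxx ?orbT.
- by rewrite eq_sym oppr_eq0 mulf_eq0 invr_eq0 (negbTE an0) (negbTE bn0).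
by move=> x x0 x1; rewrite (negbTE x0) (negbTE x1).
Qed.

End Helpers.

Section NT.
Local Close Scope ring_scope.

Lemma nt (p h r n : nat) : prime p -> 11 < p -> 0 < r ->
  n * (p ^ r - 1) = 3 * (p ^ h - 1) -> 3 < n ->
  exists e, [/\ 0 < e, n = e * 3 & p ^ h - 1 = e * (p ^ r - 1)].
Proof.
move=> pp p11 r0 Hn n3.
have pr : p ^ r = p * p ^ r.-1 by rewrite -expnS prednK.
have x1 : 0 < p ^ r.-1 by rewrite expn_gt0; lia.
set x := p ^ r.-1 in pr x1.
set M := p ^ r - 1.
have px : 12 <= p * x by rewrite -[12]muln1 leq_mul //; lia.
have M12 : 11 <= M by rewrite /M pr; lia.
have ph1 : 0 < p ^ h by rewrite expn_gt0; lia.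
have eh : p ^ h = (p ^ r) ^ (h %/ r) * p ^ (h %% r).
  by rewrite -expnM -expnD mulnC -divn_eq.
have prM : p ^ r = 1 %[mod M].
  have -> : p ^ r = M + 1 by rewrite /M; lia.
  by rewrite modnDl.
have phs : p ^ h = p ^ (h %% r) %[mod M].
  by rewrite eh -modnMml -modnXm prM modnXm exp1n modnMml mul1n.
have h3 : (3 * p ^ h) %% M = 3.
  have -> : 3 * p ^ h = 3 * (p ^ h - 1) + 3 by lia.
  rewrite -Hn -modnDml modnMl add0n modn_small //; lia.
have s3 : (3 * p ^ (h %% r)) %% M = 3 by rewrite -modnMmr -phs modnMmr.
have slt : h %% r < r by rewrite ltn_mod.
move: (h %% r) slt s3 phs => s slt s3 phs.
have ps : p ^ s <= x.
  by rewrite /x leq_pexp2l ?(ltn_trans _ p11) // -ltnS prednK.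
have px12 : 12 * x <= p * x by rewrite leq_mul2r p11 orbT.
rewrite modn_small in s3; last first.
  rewrite /M pr; move: (p ^ s) ps => y ps; clear -ps px12 x1; lia.
have s0 : s = 0.
  have : p ^ s = 1 by move: (p ^ s) s3 => y; clear; lia.
  case: (s) => // s'; rewrite expnS => /eqP; rewrite muln_eq1 => /andP[/eqP p1 _].
  by move: p11; rewrite p1.
have dv : M %| p ^ h - 1.
  rewrite -eqn_mod_dvd // phs s0 expn0 //.
exists ((p ^ h - 1) %/ M).
have he : p ^ h - 1 = (p ^ h - 1) %/ M * M by rewrite divnK.
have M0 : 0 < M by apply: leq_trans M12.
have ne : n = (p ^ h - 1) %/ M * 3.
  apply/eqP; rewrite -(eqn_pmul2r M0).
  by rewrite Hn {1}he; apply/eqP; ring.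
split => //; rewrite lt0n; apply/eqP => e0; by move: n3; rewrite ne e0.
Qed.

End NT.

Lemma mod3 (p r : nat) : prime p -> (11 < p)%N -> (p ^ r %% 3 <> 1)%N -> (p ^ r %% 3 = 2)%N.
Proof.
move=> pp p11 H1.
have : ~~ (3 %| p ^ r)%N.
  rewrite Euclid_dvdX // dvdn_prime2 //; apply/negP => /andP[/eqP p3 _].
  by move: p11; rewrite -p3.
rewrite /dvdn => H0; have := ltn_mod (p ^ r) 3; move: H0 H1.
move: (p ^ r %% 3)%N => x; lia.
Qed.

Theorem theorem5p1 (p h r n : nat) (F K : finFieldType) (f : {rmorphism K -> F})
  (a b : K) :
  prime p -> (11 < p)%N -> (0 < h)%N -> (0 < r)%N ->
  #|F| = (p ^ h)%N -> #|K| = (p ^ r)%N ->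
  a != 0 -> b != 0 -> (3 < n)%N ->
  (n * (p ^ r - 1) = 3 * (p ^ h - 1))%N ->
  let k := Npts_axes 3 a b in
  ((p ^ r %% 3 = 1)%N ->
     (Npts n (f a) (f b))%:R =
       (n ^ 2)%:R / 9%:R * ((Npts 3 a b)%:R - k%:R) + n%:R * k%:R / 3%:R :> rat) /\
  ((p ^ r %% 3 <> 1)%N ->
     (Npts n (f a) (f b))%:R =
       (n ^ 2)%:R / 9%:R * ((p ^ r)%:R - 2%:R) + n%:R :> rat).
Proof.
move=> pp p11 h0 r0 HF HK an0 bn0 n3 Hn k.
have [e [e0 ne he]] := @nt p h r n pp p11 r0 Hn n3.
have He : (#|F|.-1 = e * #|K|.-1)%N by rewrite HF HK -!subn1.
rewrite /k ne (@NF F K f e a b e0 He an0 bn0) NK NKaxes.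
split.
  move=> _; rewrite !natrD !natrM.
  by field.
move=> H1.
have H3 : (#|K| %% 3 = 2)%N by rewrite HK; exact: (@mod3 p r pp p11 H1).
have YX := @YXsum K a b H3.
rewrite (@Xsum2 K a b H3 an0 bn0) (@Bsum1 K b H3) in YX *.
have -> : Ysum a b = (p ^ r - 2)%N by rewrite -HK -YX addnK.
have P2 : (2 <= p ^ r)%N by rewrite -HK -YX leq_addl.
rewrite !natrD !natrM natrB //.
by field.
Qed.
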